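(* Let $q\in\mathbf{k}$ be invertible. The Koszul dual operad of the operad of differential $q$-tridendriform algebras of weight zero is the operad of $\frac1q$-triassociative algebras $(T,\dashv,\vdash,\perp)$ equipped with one linear operator $\partial:T\to T$ lying in the centroid and satisfying $\partial^2=0$, i.e. $\partial(a\ast b)=\partial(a)\ast b=a\ast\partial(b)$ for all $a,b\in T$ and $\ast\in\{\dashv,\vdash,\perp\}$, and $\partial\circ\partial=0$.
   Context: $\mathbf{k}$ is a commutative unital ring (a field for Koszul duality). For $q\in\mathbf{k}$, the operad of differential $q$-tridendriform algebras of weight zero is the (nonsymmetric, quadratic) operad generated by three binary operations $\prec,\succ,\bullet$ and one unary operation $d$, subject to the $q$-tridendriform relations (with $\star_q:=\prec+\succ+q\bullet$): $(a\prec b)\prec c=a\prec(b\star_q c)$, $(a\succ b)\prec c=a\succ(b\prec c)$, $(a\star_q b)\succ c=a\succ(b\succ c)$, $(a\succ b)\bullet c=a\succ(b\bullet c)$, $(a\prec b)\bullet c=a\bullet(b\succ c)$, $(a\bullet b)\prec c=a\bullet(b\prec c)$, $(a\bullet b)\bullet c=a\bullet(b\bullet c)$, and the Leibniz relations $d(a\ast b)=d(a)\ast b+a\ast d(b)$ for $\ast\in\{\prec,\succ,\bullet\}$. Koszul duality of operads is in the sense of Ginzburg–Kapranov/Loday–Vallette. For $p\in\mathbf{k}$, a $p$-triassociative algebra is a $\mathbf{k}$-module $T$ with bilinear operations $\dashv,\vdash,\perp$ such that for all $a,b,c$: $(a\dashv b)\dashv c=a\dashv(b\dashv c)$, $(a\dashv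 b)\dashv c=a\dashv(b\vdash c)$, $(a\vdash b)\dashv c=a\vdash(b\dashv c)$, $(a\dashv b)\vdash c=a\vdash(b\vdash c)$, $(a\vdash b)\vdash c=a\vdash(b\vdash c)$, $(a\perp b)\perp c=a\perp(b\perp c)$, $(a\dashv b)\dashv c=p\,a\dashv(b\perp c)$, $(a\perp b)\dashv c=a\perp(b\dashv c)$, $(a\dashv b)\perp c=a\perp(b\vdash c)$, $(a\vdash b)\perp c=a\vdash(b\perp c)$, $p\,(a\perp b)\vdash c=a\vdash(b\vdash c)$. *)

(* Defs.v *)
From HB Require Import structures.
From mathcomp Require Import all_boot all_order all_algebra.
Set Implicit Arguments. Unset Strict Implicit. Unset Printing Implicit Defensive.
Import GRing.Theory.
Local Open Scope ring_scope.

(* Weight-2 tree monomials of the free ns operad on unary generators U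
   and binary generators B.  Reading of each monomial on inputs a,b,c:
     UU u v   = u o v              : a |-> u(v(a))            (arity 1)
     UB u m   = u o m              : (a,b) |-> u(m(a,b))      (arity 2)
     BU1 m u  = m o_1 u            : (a,b) |-> m(u(a),b)      (arity 2)
     BU2 m u  = m o_2 u            : (a,b) |-> m(a,u(b))      (arity 2)
     BB1 m n  = m o_1 n            : (a,b,c) |-> m(n(a,b),c)  (arity 3)
     BB2 m n  = m o_2 n            : (a,b,c) |-> m(a,n(b,c))  (arity 3) *)
Inductive tree2 (U B : Type) : Type :=
| UU  of U & U
| UB  of U & B
| BU1 of B & U
| BU2 of B & U
| BB1 of B & B
| BB2 of B & B.
Arguments UU {U B}. Arguments UB {U B}. Arguments BU1 {U B}.
Arguments BU2 {U B}. Arguments BB1 {U B}. Arguments BB2 {U B}.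

Section Tree2Fin.
Variables U B : finType.
Definition tree2_enc (t : tree2 U B) :
  ((U * U) + (U * B) + (B * U) + (B * U) + (B * B) + (B * B))%type :=
  match t with
  | UU u v => inl (inl (inl (inl (inl (u, v)))))
  | UB u m => inl (inl (inl (inl (inr (u, m)))))
  | BU1 m u => inl (inl (inl (inr (m, u))))
  | BU2 m u => inl (inl (inr (m, u)))
  | BB1 m n => inl (inr (m, n))
  | BB2 m n => inr (m, n)
  end.
Definition tree2_dec
  (x : ((U * U) + (U * B) + (B * U) + (B * U) + (B * B) + (B * B))%type)
  : tree2 U B :=
  match x with
  | inl (inl (inl (inl (inl (u, v))))) => UU u v
  | inl (inl (inl (inl (inr (u, m))))) => UB u m
  | inl (inl (inl (inr (m, u)))) => BU1 m u
  | inl (inl (inr (m, u))) => BU2 m u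
  | inl (inr (m, n)) => BB1 m n
  | inr (m, n) => BB2 m n
  end.
Lemma tree2_encK : cancel tree2_enc tree2_dec. Proof. by case. Qed.
HB.instance Definition _ := Finite.copy (tree2 U B) (can_type tree2_encK).
End Tree2Fin.

Definition wt2 (k : fieldType) (U B : finType) := {ffun tree2 U B -> k}.

Definition mono (k : fieldType) (U B : finType) (t : tree2 U B) : wt2 k U B :=
  [ffun s => (s == t)%:R].

(* Sign of the Loday--Vallette pairing F(E)^(2) (x) F(E^v)^(2) -> k on the
   (dual) basis monomials: partial composition in the second slot of a
   binary operation gets -1 (LV, ns binary case); composing a unary
   generator into an input of a binary operation gets -1 (Koszul sign of
   the suspension, so that Leibniz <-> centroid as for AsDer^!). *)
Definition pair_sign (k : fieldType) (U B : finType) (t : tree2 U B) : k :=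
  match t with
  | UU _ _ => 1 | UB _ _ => 1 | BU1 _ _ => -1 | BU2 _ _ => -1
  | BB1 _ _ => 1 | BB2 _ _ => -1
  end.

Definition pairing (k : fieldType) (U B : finType) (x y : wt2 k U B) : k :=
  \sum_(t : tree2 U B) pair_sign k t * x t * y t.

Definition rel_span (k : fieldType) (U B : finType) (rs : seq (wt2 k U B))
  (v : wt2 k U B) : Prop :=
  exists c : 'I_(size rs) -> k,
    forall t, v t = \sum_(i < size rs) c i * (rs`_i) t.

Definition sc (k : fieldType) (U B : finType) (a : k) (v : wt2 k U B)
  : wt2 k U B := [ffun t => a * v t].

(* The relation space R^perp of the Koszul dual P(E,R)^! = P(E^v, R^perp),
   E^v identified with E through the dual basis. *)
Definition koszul_dual_rels (k : fieldType) (U B : finType)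
  (rs : seq (wt2 k U B)) (y : wt2 k U B) : Prop :=
  forall x, rel_span rs x -> pairing x y = 0.

(* One unary generator (d, resp. its dual
   partial).  Three binary generators:
     OL  <->  prec  (tridendriform)   /  dashv (triassociative)
     OR  <->  succ                    /  vdash
     OM  <->  bullet                  /  perp                          *)
Inductive op3 := OL | OR | OM.
Definition op3_enc (o : op3) : 'I_3 :=
  match o with OL => inord 0 | OR => inord 1 | OM => inord 2 end.
Definition op3_dec (i : 'I_3) : op3 :=
  match val i with 0 => OL | 1 => OR | _ => OM end.
Lemma op3_encK : cancel op3_enc op3_dec.
Proof. by case; rewrite /op3_dec /= inordK. Qed.
HB.instance Definition _ := Finite.copy op3 (can_type op3_encK).

Notation V k := (wt2 k unit op3).
Notation m k t := (@mono k unit op3 t).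

(* Relations of the operad of differential q-tridendriform algebras of
   weight zero, with star_q = prec + succ + q bullet. *)
Definition leibniz_rel (k : fieldType) (o : op3) : V k :=
  m k (UB tt o) - m k (BU1 o tt) - m k (BU2 o tt).

Definition dtridend_rels (k : fieldType) (q : k) : seq (V k) :=
  [:: (* (a<b)<c = a<(b *_q c) *)
      m k (BB1 OL OL) - (m k (BB2 OL OL) + m k (BB2 OL OR) + sc q (m k (BB2 OL OM)));
      (* (a>b)<c = a>(b<c) *)
      m k (BB1 OL OR) - m k (BB2 OR OL);
      (* (a *_q b)>c = a>(b>c) *)
      (m k (BB1 OR OL) + m k (BB1 OR OR) + sc q (m k (BB1 OR OM))) - m k (BB2 OR OR);
      (* (a>b).c = a>(b.c) *)
      m k (BB1 OM OR) - m k (BB2 OR OM);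
      (* (a<b).c = a.(b>c) *)
      m k (BB1 OM OL) - m k (BB2 OM OR);
      (* (a.b)<c = a.(b<c) *)
      m k (BB1 OL OM) - m k (BB2 OM OL);
      (* (a.b).c = a.(b.c) *)
      m k (BB1 OM OM) - m k (BB2 OM OM);
      (* d(a*b) = d(a)*b + a*d(b) *)
      leibniz_rel k OL; leibniz_rel k OR; leibniz_rel k OM ].

Definition centroid_rel1 (k : fieldType) (o : op3) : V k :=
  m k (UB tt o) - m k (BU1 o tt).
Definition centroid_rel2 (k : fieldType) (o : op3) : V k :=
  m k (UB tt o) - m k (BU2 o tt).

Definition triass_centroid_rels (k : fieldType) (p : k) : seq (V k) :=
  [:: (* (a-|b)-|c = a-|(b-|c) *) m k (BB1 OL OL) - m k (BB2 OL OL);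
      (* (a-|b)-|c = a-|(b|-c) *) m k (BB1 OL OL) - m k (BB2 OL OR);
      (* (a|-b)-|c = a|-(b-|c) *) m k (BB1 OL OR) - m k (BB2 OR OL);
      (* (a-|b)|-c = a|-(b|-c) *) m k (BB1 OR OL) - m k (BB2 OR OR);
      (* (a|-b)|-c = a|-(b|-c) *) m k (BB1 OR OR) - m k (BB2 OR OR);
      (* (a_|_b)_|_c = a_|_(b_|_c) *) m k (BB1 OM OM) - m k (BB2 OM OM);
      (* (a-|b)-|c = p a-|(b_|_c) *) m k (BB1 OL OL) - sc p (m k (BB2 OL OM));
      (* (a_|_b)-|c = a_|_(b-|c) *) m k (BB1 OL OM) - m k (BB2 OM OL);
      (* (a-|b)_|_c = a_|_(b|-c) *) m k (BB1 OM OL) - m k (BB2 OM OR);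
      (* (a|-b)_|_c = a|-(b_|_c) *) m k (BB1 OM OR) - m k (BB2 OR OM);
      (* p (a_|_b)|-c = a|-(b|-c) *) sc p (m k (BB1 OR OM)) - m k (BB2 OR OR);
      (* partial(a*b) = partial(a)*b *)
      centroid_rel1 k OL; centroid_rel1 k OR; centroid_rel1 k OM;
      (* partial(a*b) = a*partial(b) *)
      centroid_rel2 k OL; centroid_rel2 k OR; centroid_rel2 k OM;
      (* partial o partial = 0 *)
      m k (UU tt tt) ].

(* Main.v *)
Require Import Defs.
From mathcomp Require Import all_boot all_order all_algebra.
From mathcomp Require Import ring.

Import GRing.Theory.
Local Open Scope ring_scope.

Ltac eqs :=
  repeat match goal with
  | |- context [ (?a == ?b) ] =>
      (rewrite (eqxx a)) ||
      (have -> : (a == b) = false by apply/eqP; discriminate)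
  end.

Definition oeq (a b : op3) := match a, b with OL,OL|OR,OR|OM,OM => true | _,_ => false end.
Definition teq (s t : tree2 unit op3) := match s, t with
 | UU _ _, UU _ _ => true | UB _ a, UB _ b => oeq a b | BU1 a _, BU1 b _ => oeq a b
 | BU2 a _, BU2 b _ => oeq a b | BB1 a b, BB1 c d => oeq a c && oeq b d
 | BB2 a b, BB2 c d => oeq a c && oeq b d | _, _ => false end.
Lemma teqE (s t : tree2 unit op3) : (s == t) = teq s t.
Proof.
case: (eqVneq s t) => [->|ne].
  by case: t => [[] []|[] []|[] []|[] []|[] []|[] []].
apply/esym/negbTE; apply: contra ne => h; apply/eqP.
by move: h; case: s => [[] []|[] []|[] []|[] []|[] []|[] []];
  case: t => [[] []|[] []|[] []|[] []|[] []|[] []].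
Qed.

Section Aux.
Variable k : fieldType.

Lemma pairingD (u v y : V k) : pairing (u + v) y = pairing u y + pairing v y.
Proof. rewrite /pairing -big_split; apply: eq_bigr => t _; by rewrite ffunE mulrDr mulrDl. Qed.
Lemma pairingB (u v y : V k) : pairing (u - v) y = pairing u y - pairing v y.
Proof.
rewrite /pairing -sumrB; apply: eq_bigr => t _; rewrite !ffunE; ring.
Qed.
Lemma pairing_sc a (u y : V k) : pairing (sc a u) y = a * pairing u y.
Proof. rewrite /pairing mulr_sumr; apply: eq_bigr => t _; rewrite ffunE; ring. Qed.
Lemma pairing_mono t (y : V k) : pairing (m k t) y = pair_sign k t * y t.
Proof.
rewrite /pairing (bigD1 t) //= big1 ?ffunE ?eqxx.
  by rewrite addr0 mulr1.
by move=> s /negbTE hs; rewrite ffunE hs mulr0 mul0r.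
Qed.

Lemma rel_span_nth (rs : seq (V k)) (i : nat) : (i < size rs)%N -> rel_span rs rs`_i.
Proof.
move=> hi; exists (fun j => (val j == i)%:R) => t.
rewrite (bigD1 (Ordinal hi)) //= eqxx mul1r big1 ?addr0 //.
move=> j hj; have -> : (val j == i) = false.
  by apply/negbTE; apply: contra hj => /eqP e; apply/eqP; apply: val_inj.
by rewrite mul0r.
Qed.

Lemma pairing_span (rs : seq (V k)) x y : rel_span rs x ->
  (forall i, (i < size rs)%N -> pairing rs`_i y = 0) -> pairing x y = 0.
Proof.
move=> [c hc] h.
have -> : pairing x y = \sum_(i < size rs) c i * pairing rs`_i y.
  rewrite /pairing; under eq_bigr do rewrite hc mulr_sumr mulr_suml.
  rewrite exchange_big /=; apply: eq_bigr => i _; rewrite mulr_sumr.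
  by apply: eq_bigr => t _; ring.
by rewrite big1 // => i _; rewrite h // mulr0.
Qed.
End Aux.


Section S.
Variable k : fieldType.
Notation ps := (pair_sign k).
Lemma S1 (a b c d : tree2 unit op3) (y : V k) r : pairing (m k a - (m k b + m k c + sc r (m k d))) y =
  ps a * y a - (ps b * y b + ps c * y c + r * (ps d * y d)).
Proof. by rewrite pairingB !pairingD pairing_sc !pairing_mono. Qed.
Lemma S2 (a b : tree2 unit op3) (y : V k) : pairing (m k a - m k b) y = ps a * y a - ps b * y b.
Proof. by rewrite pairingB !pairing_mono. Qed.
Lemma S3 (a b c d : tree2 unit op3) (y : V k) r : pairing ((m k a + m k b + sc r (m k c)) - m k d) y =
  ps a * y a + ps b * y b + r * (ps c * y c) - ps d * y d.
Proof. by rewrite pairingB !pairingD pairing_sc !pairing_mono. Qed.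
Lemma S4 (a b c : tree2 unit op3) (y : V k) : pairing (m k a - m k b - m k c) y = ps a * y a - ps b * y b - ps c * y c.
Proof. by rewrite !pairingB !pairing_mono. Qed.
Lemma subE (u v : V k) t : (u - v) t = u t - v t. Proof. by rewrite !ffunE. Qed.
Lemma scE a (u : V k) t : (sc a u) t = a * u t. Proof. by rewrite !ffunE. Qed.
Lemma monoE' a t : (m k a) t = (teq t a)%:R. Proof. by rewrite !ffunE teqE. Qed.

Definition TL (M : tree2 unit op3 -> V k) (p : k) : seq (V k) :=
  [:: M (BB1 OL OL) - M (BB2 OL OL);
      M (BB1 OL OL) - M (BB2 OL OR);
      M (BB1 OL OR) - M (BB2 OR OL);
      M (BB1 OR OL) - M (BB2 OR OR);
      M (BB1 OR OR) - M (BB2 OR OR);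
      M (BB1 OM OM) - M (BB2 OM OM);
      M (BB1 OL OL) - sc p (M (BB2 OL OM));
      M (BB1 OL OM) - M (BB2 OM OL);
      M (BB1 OM OL) - M (BB2 OM OR);
      M (BB1 OM OR) - M (BB2 OR OM);
      sc p (M (BB1 OR OM)) - M (BB2 OR OR);
      M (UB tt OL) - M (BU1 OL tt); M (UB tt OR) - M (BU1 OR tt); M (UB tt OM) - M (BU1 OM tt);
      M (UB tt OL) - M (BU2 OL tt); M (UB tt OR) - M (BU2 OR tt); M (UB tt OM) - M (BU2 OM tt);
      M (UU tt tt) ].

Lemma span_lem (q : k) (hq : q != 0) (M : tree2 unit op3 -> V k)
  (HM : forall a t, M a t = (teq t a)%:R) (y : V k)
  (F0 : y (BB1 OL OL) = - (y (BB2 OL OL) + y (BB2 OL OR) + q * y (BB2 OL OM)))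
  (F1 : y (BB2 OR OL) = - y (BB1 OL OR))
  (F2 : y (BB2 OR OR) = - (y (BB1 OR OL) + y (BB1 OR OR) + q * y (BB1 OR OM)))
  (F3 : y (BB2 OR OM) = - y (BB1 OM OR))
  (F4 : y (BB2 OM OR) = - y (BB1 OM OL))
  (F5 : y (BB2 OM OL) = - y (BB1 OL OM))
  (F6 : y (BB2 OM OM) = - y (BB1 OM OM))
  (F7 : y (UB tt OL) = - (y (BU1 OL tt) + y (BU2 OL tt)))
  (F8 : y (UB tt OR) = - (y (BU1 OR tt) + y (BU2 OR tt)))
  (F9 : y (UB tt OM) = - (y (BU1 OM tt) + y (BU2 OM tt))) :
  rel_span (TL M q^-1) y.
Proof.
  pose cs : seq k := [:: - y (BB2 OL OL); - y (BB2 OL OR); y (BB1 OL OR);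
    y (BB1 OR OL); y (BB1 OR OR); y (BB1 OM OM); - q * y (BB2 OL OM);
    y (BB1 OL OM); y (BB1 OM OL); y (BB1 OM OR); q * y (BB1 OR OM);
    - y (BU1 OL tt); - y (BU1 OR tt); - y (BU1 OM tt);
    - y (BU2 OL tt); - y (BU2 OR tt); - y (BU2 OM tt); y (UU tt tt)].
  exists (fun i => nth 0 cs i) => t.
  rewrite -(big_mkord xpredT (fun i => nth 0 cs i * (TL M q^-1)`_i t)).
  rewrite /index_iota subn0.
  cbn [iota].
  rewrite !big_cons big_nil.
  rewrite /cs /TL.
  cbn [nth].
  rewrite !subE !scE !HM.
  (case: t => [[] []|[] o|o []|o []|o1 o2|o1 o2];
    try case: o; try case: o1; try case: o2; cbn [teq oeq andb nat_of_bool];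
    rewrite ?(F0, F1, F2, F3, F4, F5, F6, F7, F8, F9); field; exact hq).
Qed.

Ltac ev Hy HM a := let H := fresh in have H := Hy a; cbn [iota] in H;
  rewrite !big_cons big_nil /TL in H; cbn [nth] in H; rewrite !subE !scE !HM in H;
  cbn [teq oeq andb nat_of_bool] in H; rewrite H; clear H.
Lemma eval_lem (q : k) (hq : q != 0) (M : tree2 unit op3 -> V k)
  (HM : forall a t, M a t = (teq t a)%:R) (y : V k) (d : 'I_18 -> k)
  (Hy : forall t, y t = \sum_(i < 18) d i * (TL M q^-1)`_i t) :
  [/\ y (BB1 OL OL) + y (BB2 OL OL) + y (BB2 OL OR) + q * y (BB2 OL OM) = 0,
      y (BB1 OL OR) + y (BB2 OR OL) = 0,
      y (BB1 OR OL) + y (BB1 OR OR) + q * y (BB1 OR OM) + y (BB2 OR OR) = 0,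
      y (BB1 OM OR) + y (BB2 OR OM) = 0 &
   [/\ y (BB1 OM OL) + y (BB2 OM OR) = 0,
      y (BB1 OL OM) + y (BB2 OM OL) = 0,
      y (BB1 OM OM) + y (BB2 OM OM) = 0 &
   [/\ y (UB tt OL) + y (BU1 OL tt) + y (BU2 OL tt) = 0,
      y (UB tt OR) + y (BU1 OR tt) + y (BU2 OR tt) = 0 &
      y (UB tt OM) + y (BU1 OM tt) + y (BU2 OM tt) = 0]]].
Proof.
  have Hy' t : y t = \sum_(i <- iota 0 18) nth 0 [seq d x | x <- enum 'I_18] i * (TL M q^-1)`_i t.
    rewrite Hy (_ : iota 0 18 = index_iota 0 18) // big_mkord.
    apply: eq_bigr => i _; congr (_ * _).
    by rewrite (nth_map ord0) ?size_enum_ord // nth_ord_enum.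
  set D := [seq d x | x <- enum 'I_18] in Hy'.
  ev Hy' HM (BB1 OL OL : tree2 unit op3).
  ev Hy' HM (BB2 OL OL : tree2 unit op3).
  ev Hy' HM (BB2 OL OR : tree2 unit op3).
  ev Hy' HM (BB2 OL OM : tree2 unit op3).
  ev Hy' HM (BB1 OL OR : tree2 unit op3).
  ev Hy' HM (BB2 OR OL : tree2 unit op3).
  ev Hy' HM (BB1 OR OL : tree2 unit op3).
  ev Hy' HM (BB1 OR OR : tree2 unit op3).
  ev Hy' HM (BB1 OR OM : tree2 unit op3).
  ev Hy' HM (BB2 OR OR : tree2 unit op3).
  ev Hy' HM (BB1 OM OR : tree2 unit op3).
  ev Hy' HM (BB2 OR OM : tree2 unit op3).
  ev Hy' HM (BB1 OM OL : tree2 unit op3).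
  ev Hy' HM (BB2 OM OR : tree2 unit op3).
  ev Hy' HM (BB1 OL OM : tree2 unit op3).
  ev Hy' HM (BB2 OM OL : tree2 unit op3).
  ev Hy' HM (BB1 OM OM : tree2 unit op3).
  ev Hy' HM (BB2 OM OM : tree2 unit op3).
  ev Hy' HM (UB tt OL : tree2 unit op3).
  ev Hy' HM (UB tt OR : tree2 unit op3).
  ev Hy' HM (UB tt OM : tree2 unit op3).
  ev Hy' HM (BU1 OL tt : tree2 unit op3).
  ev Hy' HM (BU1 OR tt : tree2 unit op3).
  ev Hy' HM (BU1 OM tt : tree2 unit op3).
  ev Hy' HM (BU2 OL tt : tree2 unit op3).
  ev Hy' HM (BU2 OR tt : tree2 unit op3).
  ev Hy' HM (BU2 OM tt : tree2 unit op3).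
  repeat split.
  all: (field; exact hq).
Qed.
End S.
Theorem proposition3p25 (k : fieldType) (q : k) (hq : q != 0) :
  forall y : wt2 k unit op3,
    koszul_dual_rels (dtridend_rels q) y <-> rel_span (triass_centroid_rels q^-1) y.
Proof.
move=> y; split.
- move=> H.
  have E i : (i < 10)%N -> pairing (dtridend_rels q)`_i y = 0.
    by move=> hi; apply: H; apply: rel_span_nth.
  have E0 : pairing (m k (BB1 OL OL) - (m k (BB2 OL OL) + m k (BB2 OL OR) + sc q (m k (BB2 OL OM)))) y = 0 := E 0%N erefl.
  rewrite S1 in E0. cbn [pair_sign] in E0.
  have E1 : pairing (m k (BB1 OL OR) - m k (BB2 OR OL)) y = 0 := E 1%N erefl.
  rewrite S2 in E1. cbn [pair_sign] in E1.
  have E2 : pairing ((m k (BB1 OR OL) + m k (BB1 OR OR) + sc q (m k (BB1 OR OM))) - m k (BB2 OR OR)) y = 0 := E 2%N erefl.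
  rewrite S3 in E2. cbn [pair_sign] in E2.
  have E3 : pairing (m k (BB1 OM OR) - m k (BB2 OR OM)) y = 0 := E 3%N erefl.
  rewrite S2 in E3. cbn [pair_sign] in E3.
  have E4 : pairing (m k (BB1 OM OL) - m k (BB2 OM OR)) y = 0 := E 4%N erefl.
  rewrite S2 in E4. cbn [pair_sign] in E4.
  have E5 : pairing (m k (BB1 OL OM) - m k (BB2 OM OL)) y = 0 := E 5%N erefl.
  rewrite S2 in E5. cbn [pair_sign] in E5.
  have E6 : pairing (m k (BB1 OM OM) - m k (BB2 OM OM)) y = 0 := E 6%N erefl.
  rewrite S2 in E6. cbn [pair_sign] in E6.
  have E7 : pairing (m k (UB tt OL) - m k (BU1 OL tt) - m k (BU2 OL tt)) y = 0 := E 7%N erefl.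
  rewrite S4 in E7. cbn [pair_sign] in E7.
  have E8 : pairing (m k (UB tt OR) - m k (BU1 OR tt) - m k (BU2 OR tt)) y = 0 := E 8%N erefl.
  rewrite S4 in E8. cbn [pair_sign] in E8.
  have E9 : pairing (m k (UB tt OM) - m k (BU1 OM tt) - m k (BU2 OM tt)) y = 0 := E 9%N erefl.
  rewrite S4 in E9. cbn [pair_sign] in E9.
  have F0 : y (BB1 OL OL) = - (y (BB2 OL OL) + y (BB2 OL OR) + q * y (BB2 OL OM)).
    by apply/eqP; rewrite -subr_eq0; apply/eqP; rewrite -E0; ring.
  have F1 : y (BB2 OR OL) = - y (BB1 OL OR).
    by apply/eqP; rewrite -subr_eq0; apply/eqP; rewrite -E1; ring.
  have F2 : y (BB2 OR OR) = - (y (BB1 OR OL) + y (BB1 OR OR) + q * y (BB1 OR OM)).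
    by apply/eqP; rewrite -subr_eq0; apply/eqP; rewrite -E2; ring.
  have F3 : y (BB2 OR OM) = - y (BB1 OM OR).
    by apply/eqP; rewrite -subr_eq0; apply/eqP; rewrite -E3; ring.
  have F4 : y (BB2 OM OR) = - y (BB1 OM OL).
    by apply/eqP; rewrite -subr_eq0; apply/eqP; rewrite -E4; ring.
  have F5 : y (BB2 OM OL) = - y (BB1 OL OM).
    by apply/eqP; rewrite -subr_eq0; apply/eqP; rewrite -E5; ring.
  have F6 : y (BB2 OM OM) = - y (BB1 OM OM).
    by apply/eqP; rewrite -subr_eq0; apply/eqP; rewrite -E6; ring.
  have F7 : y (UB tt OL) = - (y (BU1 OL tt) + y (BU2 OL tt)).
    by apply/eqP; rewrite -subr_eq0; apply/eqP; rewrite -E7; ring.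
  have F8 : y (UB tt OR) = - (y (BU1 OR tt) + y (BU2 OR tt)).
    by apply/eqP; rewrite -subr_eq0; apply/eqP; rewrite -E8; ring.
  have F9 : y (UB tt OM) = - (y (BU1 OM tt) + y (BU2 OM tt)).
    by apply/eqP; rewrite -subr_eq0; apply/eqP; rewrite -E9; ring.
  change (rel_span (@TL k (@mono k unit op3) q^-1) y).
  exact: (@span_lem k q hq _ (@monoE' k) y F0 F1 F2 F3 F4 F5 F6 F7 F8 F9).
- case=> d Hd.
  have [[G0 G1 G2 G3] [G4 G5 G6] [G7 G8 G9]] :=
    @eval_lem k q hq (@mono k unit op3) (@monoE' k) y d Hd.
  move=> x Hx; apply: pairing_span Hx _ => i hi.
  move: hi; case: i => [|[|[|[|[|[|[|[|[|[|i]]]]]]]]]] // _.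
  - change (pairing (m k (BB1 OL OL) - (m k (BB2 OL OL) + m k (BB2 OL OR) + sc q (m k (BB2 OL OM)))) y = 0).
    rewrite S1; cbn [pair_sign].
    by apply: (etrans _ G0); ring.
  - change (pairing (m k (BB1 OL OR) - m k (BB2 OR OL)) y = 0).
    rewrite S2; cbn [pair_sign].
    by apply: (etrans _ G1); ring.
  - change (pairing ((m k (BB1 OR OL) + m k (BB1 OR OR) + sc q (m k (BB1 OR OM))) - m k (BB2 OR OR)) y = 0).
    rewrite S3; cbn [pair_sign].
    by apply: (etrans _ G2); ring.
  - change (pairing (m k (BB1 OM OR) - m k (BB2 OR OM)) y = 0).
    rewrite S2; cbn [pair_sign].
    by apply: (etrans _ G3); ring.
  - change (pairing (m k (BB1 OM OL) - m k (BB2 OM OR)) y = 0).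
    rewrite S2; cbn [pair_sign].
    by apply: (etrans _ G4); ring.
  - change (pairing (m k (BB1 OL OM) - m k (BB2 OM OL)) y = 0).
    rewrite S2; cbn [pair_sign].
    by apply: (etrans _ G5); ring.
  - change (pairing (m k (BB1 OM OM) - m k (BB2 OM OM)) y = 0).
    rewrite S2; cbn [pair_sign].
    by apply: (etrans _ G6); ring.
  - change (pairing (m k (UB tt OL) - m k (BU1 OL tt) - m k (BU2 OL tt)) y = 0).
    rewrite S4; cbn [pair_sign].
    by apply: (etrans _ G7); ring.
  - change (pairing (m k (UB tt OR) - m k (BU1 OR tt) - m k (BU2 OR tt)) y = 0).
    rewrite S4; cbn [pair_sign].
    by apply: (etrans _ G8); ring.
  - change (pairing (m k (UB tt OM) - m k (BU1 OM tt) - m k (BU2 OM tt)) y = 0).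
    rewrite S4; cbn [pair_sign].
    by apply: (etrans _ G9); ring.
Qed.
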